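(* Let $\mathcal{T}$ be a smooth manifold with local coordinates $(t^a)$ carrying a Riemannian metric $h_{ab}(t)$ (inverse $h^{ab}$) with Christoffel symbols $\chi^a_{bc}(t)$, and let $M$ be a smooth $n$-dimensional manifold with local coordinates $(x^i)$ carrying a semi-Riemannian metric $\varphi_{ij}(x)$ (inverse $\varphi^{ij}$) with Christoffel symbols $\gamma^k_{ij}(x)$. Let $m\neq0$, $c>0$, $e$ be real constants, $h^*_{ab}=(4mc)^{-1}h_{ab}$, and $A^{(a)}_{(i)}(t,x)$ a smooth d-tensor on $\mathcal{T}\times M$. On $E^*=J^{1*}(\mathcal{T},M)$ with coordinates $(t^a,x^i,p^a_i)$, let $\frac{\delta}{\delta t^a}=\frac{\partial}{\partial t^a}-\chi^f_{ag}p^g_r\frac{\partial}{\partial p^f_r}$, $\frac{\delta}{\delta x^i}=\frac{\partial}{\partial x^i}-\underset{2}{N}{}^{(f)}_{(r)i}\frac{\partial}{\partial p^f_r}$ with $\underset{2}{N}{}^{(f)}_{(r)i}=\gamma^s_{ri}\big[\frac{2e}{m}A^{(f)}_{(s)}-p^f_s\big]-\frac{e}{m}\big[\frac{\partial A^{(f)}_{(r)}}{\partial x^i}+\frac{\partial A^{(f)}_{(i)}}{\partial x^r}\big]$, and $\delta p^a_i=dp^a_i+\chi^a_{fg}p^g_i\,dt^f+\underset{2}{N}{}^{(a)}_{(i)r}dx^r$. Let \[ \mathbb{G}=h^*_{ab}\,dt^a\otimes dt^b+\varphi_{ij}\,dx^i\otimes dx^j+h^*_{ab}\varphi^{ij}\,\delta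 p^a_i\otimes\delta p^b_j . \] Let $D$ be the linear connection on $E^*$ defined on the adapted frame by $D_{\frac{\delta}{\delta t^c}}\frac{\delta}{\delta t^b}=\chi^a_{bc}\frac{\delta}{\delta t^a}$, $D_{\frac{\delta}{\delta t^c}}\frac{\delta}{\delta x^j}=0$, $D_{\frac{\delta}{\delta t^c}}\frac{\partial}{\partial p^f_j}=\chi^b_{fc}\frac{\partial}{\partial p^b_j}$, $D_{\frac{\delta}{\delta x^k}}\frac{\delta}{\delta t^b}=0$, $D_{\frac{\delta}{\delta x^k}}\frac{\delta}{\delta x^j}=\gamma^i_{jk}\frac{\delta}{\delta x^i}$, $D_{\frac{\delta}{\delta x^k}}\frac{\partial}{\partial p^b_s}=-\gamma^s_{ik}\frac{\partial}{\partial p^b_i}$, and $D_{\frac{\partial}{\partial p^c_k}}$ of every adapted frame vector equal to $0$; let $\mathrm{Ric}(Y,Z)=\mathrm{tr}(X\mapsto R(X,Y)Z)$ with $R(X,Y)Z=D_XD_YZ-D_YD_XZ-D_{[X,Y]}Z$, and let $\mathrm{Sc}$ be the trace of $\mathrm{Ric}$ with respect to $\mathbb{G}$. Then \[ \mathrm{Sc}=(4mc)\,\chi+\mathfrak{R}, \] where $\chi=h^{ab}\chi_{ab}$ and $\mathfrak{R}=\varphi^{ij}\mathfrak{R}_{ij}$ are the classical scalar curvatures of $h_{ab}$ and $\varphi_{ij}$ ($\chi_{ab}$, $\mathfrak{R}_{ij}$ being their Ricci tensors).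
   Context: Indices $a,b,c,d,f,g$ run from $1$ to $\dim\mathcal{T}$, indices $i,j,k,r,s$ from $1$ to $n$; Einstein summation convention. The fibre coordinates of $J^{1*}(\mathcal{T},M)$ transform as $\tilde p^a_i=\frac{\partial \tilde t^a}{\partial t^b}\frac{\partial x^j}{\partial \tilde x^i}p^b_j$. The connection $D$ is what the paper calls the generalized Cartan canonical connection $C\Gamma$ of the autonomous multi-time Hamilton space of electrodynamics, and $\mathbb{G}$ its polymomentum gravitational $h^*$-potential. *)

(* Defs.v *)
(* Local-coordinate formalization on the chart
   R^p x R^n x R^(p*n) of E* = J^{1*}(T,M). *)
From HB Require Import structures.
From mathcomp Require Import all_boot all_order all_algebra.
From mathcomp Require Import all_classical all_reals all_analysis.
Set Implicit Arguments. Unset Strict Implicit. Unset Printing Implicit Defensive.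
Import Order.TTheory GRing.Theory Num.Theory.
Import numFieldNormedType.Exports.
Local Open Scope ring_scope.

Definition partial {R : realType} {k : nat} (i : 'I_k) (f : 'rV[R]_k -> R)
  (x : 'rV[R]_k) : R := 'D_(delta_mx ord0 i) f x.

Fixpoint Ck {R : realType} {k : nat} (d : nat) (f : 'rV[R]_k -> R) : Prop :=
  match d with
  | O => continuous f
  | d'.+1 => (forall x, differentiable f x) /\ forall i, Ck d' (partial i f)
  end.
Definition smooth {R : realType} {k : nat} (f : 'rV[R]_k -> R) : Prop :=
  forall d, Ck d f.

Definition christoffel {R : realType} {k : nat} (g : 'rV[R]_k -> 'M[R]_k)
  (a b c : 'I_k) (x : 'rV[R]_k) : R :=
  2^-1 * \sum_(d < k) invmx (g x) a d *
    (partial b (fun y => g y d c) x + partial c (fun y => g y d b) x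
     - partial d (fun y => g y b c) x).

(* Ricci tensor Ric_{jk} = tr (X |-> R(X,d_j) d_k) of the Levi-Civita
   connection, R(X,Y)Z = D_X D_Y Z - D_Y D_X Z - D_[X,Y] Z,
   D_{d_j} d_k = Gamma^l_{kj} d_l *)
Definition ricci {R : realType} {k : nat} (g : 'rV[R]_k -> 'M[R]_k)
  (j l : 'I_k) (x : 'rV[R]_k) : R :=
  \sum_(i < k)
    (partial i (fun y => christoffel g i l j y) x
     - partial j (fun y => christoffel g i l i y) x
     + \sum_(q < k) (christoffel g q l j x * christoffel g i q i x
                     - christoffel g q l i x * christoffel g i q j x)).

Definition scalar_curv {R : realType} {k : nat} (g : 'rV[R]_k -> 'M[R]_k)
  (x : 'rV[R]_k) : R :=
  \sum_(j < k) \sum_(l < k) invmx (g x) j l * ricci g j l x.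

Definition Ndim (p n : nat) : nat := (p + (n + p * n))%N.

Definition tidx {p n : nat} (a : 'I_p) : 'I_(Ndim p n) := lshift (n + p * n) a.
Definition xidx {p n : nat} (i : 'I_n) : 'I_(Ndim p n) :=
  rshift p (lshift (p * n) i).
Definition pidx {p n : nat} (a : 'I_p) (i : 'I_n) : 'I_(Ndim p n) :=
  rshift p (rshift n (mxvec_index a i)).

Definition tpart {R : realType} {p n : nat} (z : 'rV[R]_(Ndim p n)) : 'rV[R]_p :=
  \row_a z ord0 (@tidx p n a).
Definition xpart {R : realType} {p n : nat} (z : 'rV[R]_(Ndim p n)) : 'rV[R]_n :=
  \row_i z ord0 (@xidx p n i).
Definition pc {R : realType} {p n : nat} (z : 'rV[R]_(Ndim p n)) (a : 'I_p)
  (i : 'I_n) : R := z ord0 (@pidx p n a i).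

Definition ebasis {R : realType} {N : nat} (k : 'I_N) : 'rV[R]_N :=
  delta_mx ord0 k.


Definition chiE {R : realType} {p n : nat} (h : 'rV[R]_p -> 'M[R]_p)
  (a b c : 'I_p) (z : 'rV[R]_(Ndim p n)) : R := christoffel h a b c (tpart z).
Definition gamE {R : realType} {p n : nat} (phi : 'rV[R]_n -> 'M[R]_n)
  (i j k : 'I_n) (z : 'rV[R]_(Ndim p n)) : R := christoffel phi i j k (xpart z).

Definition AE {R : realType} {p n : nat} (A : 'rV[R]_p -> 'rV[R]_n -> 'M[R]_(p, n))
  (f : 'I_p) (r : 'I_n) (z : 'rV[R]_(Ndim p n)) : R := A (tpart z) (xpart z) f r.
Definition dAE {R : realType} {p n : nat} (A : 'rV[R]_p -> 'rV[R]_n -> 'M[R]_(p, n))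
  (f : 'I_p) (r i : 'I_n) (z : 'rV[R]_(Ndim p n)) : R :=
  partial i (fun y => A (tpart z) y f r) (xpart z).

Definition N2 {R : realType} {p n : nat} (phi : 'rV[R]_n -> 'M[R]_n)
  (A : 'rV[R]_p -> 'rV[R]_n -> 'M[R]_(p, n)) (m e : R)
  (f : 'I_p) (r i : 'I_n) (z : 'rV[R]_(Ndim p n)) : R :=
  \sum_(s < n) gamE phi s r i z * (2 * e / m * AE A f s z - pc z f s)
  - e / m * (dAE A f r i z + dAE A f i r z).

(* adapted frame, indexed like the coordinates:
   tidx a |-> delta/delta t^a, xidx i |-> delta/delta x^i,
   pidx a i |-> d/d p^a_i ; given by components in the coordinate basis *)
Definition frame {R : realType} {p n : nat} (h : 'rV[R]_p -> 'M[R]_p)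
  (phi : 'rV[R]_n -> 'M[R]_n) (A : 'rV[R]_p -> 'rV[R]_n -> 'M[R]_(p, n))
  (m e : R) (al : 'I_(Ndim p n)) (z : 'rV[R]_(Ndim p n)) : 'rV[R]_(Ndim p n) :=
  \sum_(a < p) (al == tidx a)%:R *:
     (ebasis (tidx a) - \sum_(f < p) \sum_(g < p) \sum_(r < n)
        (chiE h f a g z * pc z g r) *: ebasis (pidx f r))
  + \sum_(i < n) (al == xidx i)%:R *:
     (ebasis (xidx i) - \sum_(f < p) \sum_(r < n)
        N2 phi A m e f r i z *: ebasis (pidx f r))
  + \sum_(a < p) \sum_(i < n) (al == pidx a i)%:R *: ebasis (pidx a i).

(* dual coframe (dt^a, dx^i, delta p^a_i) evaluated on a coordinate vector v *)
Definition coframe {R : realType} {p n : nat} (h : 'rV[R]_p -> 'M[R]_p)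
  (phi : 'rV[R]_n -> 'M[R]_n) (A : 'rV[R]_p -> 'rV[R]_n -> 'M[R]_(p, n))
  (m e : R) (al : 'I_(Ndim p n)) (z : 'rV[R]_(Ndim p n))
  (v : 'rV[R]_(Ndim p n)) : R :=
  \sum_(a < p) (al == tidx a)%:R * v ord0 (tidx a)
  + \sum_(i < n) (al == xidx i)%:R * v ord0 (xidx i)
  + \sum_(a < p) \sum_(i < n) (al == pidx a i)%:R *
      (v ord0 (pidx a i)
       + \sum_(f < p) \sum_(g < p) chiE h a f g z * pc z g i * v ord0 (tidx f)
       + \sum_(r < n) N2 phi A m e a i r z * v ord0 (xidx r)).

(* connection coefficients of D in the adapted frame:
   D_{e_be} e_ga = sum_al conn be ga al *: e_al *)
Definition conn {R : realType} {p n : nat} (h : 'rV[R]_p -> 'M[R]_p)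
  (phi : 'rV[R]_n -> 'M[R]_n) (be ga al : 'I_(Ndim p n))
  (z : 'rV[R]_(Ndim p n)) : R :=
  \sum_(c < p) \sum_(b < p) \sum_(a < p)
     [&& be == tidx c, ga == tidx b & al == tidx a]%:R * chiE h a b c z
  + \sum_(c < p) \sum_(f < p) \sum_(j < n) \sum_(b < p)
     [&& be == tidx c, ga == pidx f j & al == pidx b j]%:R * chiE h b f c z
  + \sum_(k < n) \sum_(j < n) \sum_(i < n)
     [&& be == xidx k, ga == xidx j & al == xidx i]%:R * gamE phi i j k z
  + \sum_(k < n) \sum_(b < p) \sum_(s < n) \sum_(i < n)
     [&& be == xidx k, ga == pidx b s & al == pidx b i]%:R * (- gamE phi s i k z).
  (* all other coefficients, in particular all D_{d/dp^c_k}, vanish *)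

(* vector fields on the chart: maps z |-> coordinate components *)
Definition vfield (R : realType) (N : nat) := 'rV[R]_N -> 'rV[R]_N.

Definition dalong {R : realType} {N : nat} (X : vfield R N) (f : 'rV[R]_N -> R)
  (z : 'rV[R]_N) : R := 'D_(X z) f z.

Definition lie {R : realType} {N : nat} (X Y : vfield R N) : vfield R N :=
  fun z => \row_k (dalong X (fun w => Y w ord0 k) z - dalong Y (fun w => X w ord0 k) z).

(* the linear connection D, extended from the frame by linearity and Leibniz *)
Definition covD {R : realType} {p n : nat} (h : 'rV[R]_p -> 'M[R]_p)
  (phi : 'rV[R]_n -> 'M[R]_n) (A : 'rV[R]_p -> 'rV[R]_n -> 'M[R]_(p, n))
  (m e : R) (X Y : vfield R (Ndim p n)) : vfield R (Ndim p n) :=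
  fun z => \sum_(al < Ndim p n)
    (dalong X (fun w => coframe h phi A m e al w (Y w)) z
     + \sum_(be < Ndim p n) \sum_(ga < Ndim p n)
         coframe h phi A m e be z (X z) * coframe h phi A m e ga z (Y z)
         * conn h phi be ga al z) *: frame h phi A m e al z.

Definition curv {R : realType} {p n : nat} (h : 'rV[R]_p -> 'M[R]_p)
  (phi : 'rV[R]_n -> 'M[R]_n) (A : 'rV[R]_p -> 'rV[R]_n -> 'M[R]_(p, n))
  (m e : R) (X Y Z : vfield R (Ndim p n)) : vfield R (Ndim p n) :=
  fun z => covD h phi A m e X (covD h phi A m e Y Z) z
         - covD h phi A m e Y (covD h phi A m e X Z) z
         - covD h phi A m e (lie X Y) Z z.

Definition ricD {R : realType} {p n : nat} (h : 'rV[R]_p -> 'M[R]_p)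
  (phi : 'rV[R]_n -> 'M[R]_n) (A : 'rV[R]_p -> 'rV[R]_n -> 'M[R]_(p, n))
  (m e : R) (Y Z : vfield R (Ndim p n)) (z : 'rV[R]_(Ndim p n)) : R :=
  \sum_(al < Ndim p n) coframe h phi A m e al z
     (curv h phi A m e (frame h phi A m e al) Y Z z).

Definition Gmet {R : realType} {p n : nat} (h : 'rV[R]_p -> 'M[R]_p)
  (phi : 'rV[R]_n -> 'M[R]_n) (A : 'rV[R]_p -> 'rV[R]_n -> 'M[R]_(p, n))
  (m c e : R) (z v w : 'rV[R]_(Ndim p n)) : R :=
  let hs a b := (4 * m * c)^-1 * h (tpart z) a b in
  \sum_(a < p) \sum_(b < p) hs a b * v ord0 (tidx a) * w ord0 (tidx b)
  + \sum_(i < n) \sum_(j < n) phi (xpart z) i j * v ord0 (xidx i) * w ord0 (xidx j)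
  + \sum_(a < p) \sum_(b < p) \sum_(i < n) \sum_(j < n)
      hs a b * invmx (phi (xpart z)) i j
      * coframe h phi A m e (pidx a i) z v * coframe h phi A m e (pidx b j) z w.

Definition scD {R : realType} {p n : nat} (h : 'rV[R]_p -> 'M[R]_p)
  (phi : 'rV[R]_n -> 'M[R]_n) (A : 'rV[R]_p -> 'rV[R]_n -> 'M[R]_(p, n))
  (m c e : R) (z : 'rV[R]_(Ndim p n)) : R :=
  let Gf := \matrix_(al, be) Gmet h phi A m c e z (frame h phi A m e al z)
                                              (frame h phi A m e be z) in
  \sum_(al < Ndim p n) \sum_(be < Ndim p n)
     invmx Gf al be * ricD h phi A m e (frame h phi A m e al) (frame h phi A m e be) z.

(* Main.v *)
Require Import Defs.
From HB Require Import structures.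
From mathcomp Require Import all_boot all_order all_algebra.
From mathcomp Require Import all_classical all_reals all_analysis.
From mathcomp Require Import zify ring lra.
Import Order.TTheory GRing.Theory Num.Theory.
Import numFieldNormedType.Exports.
Local Open Scope ring_scope.
Set Implicit Arguments. Unset Strict Implicit. Unset Printing Implicit Defensive.


Section Idx.
Variables p n : nat.
Local Notation N := (Ndim p n).

Lemma tidx_eq (a b : 'I_p) : (@tidx p n a == tidx b) = (a == b).
Proof. by rewrite /tidx (inj_eq (@lshift_inj _ _)). Qed.
Lemma xidx_eq (i j : 'I_n) : (@xidx p n i == xidx j) = (i == j).
Proof. by rewrite /xidx (inj_eq (@rshift_inj _ _)) (inj_eq (@lshift_inj _ _)). Qed.
Lemma mxvec_index_inj : injective (fun ij : 'I_p * 'I_n => mxvec_index ij.1 ij.2).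
Proof.
have [g K _] := @curry_mxvec_bij p n.
move=> x y E; rewrite -(K x) // -(K y) //; congr g; case: x E; case: y => ? ? [? ?] /= E.
by [].
Qed.
Lemma pidx_eq (a b : 'I_p) (i j : 'I_n) :
  (@pidx p n a i == pidx b j) = (a == b) && (i == j).
Proof.
rewrite /pidx !(inj_eq (@rshift_inj _ _)).
apply/eqP/andP => [E|[/eqP-> /eqP->]] //.
by have := @mxvec_index_inj (a, i) (b, j) E => -[-> ->].
Qed.
Lemma tx_eq (a : 'I_p) (i : 'I_n) : (@tidx p n a == xidx i) = false.
Proof. apply/negbTE/eqP => /(congr1 val) /=; have := ltn_ord a; lia. Qed.
Lemma tp_eq (a b : 'I_p) (i : 'I_n) : (@tidx p n a == pidx b i) = false.
Proof. apply/negbTE/eqP => /(congr1 val) /=; have := ltn_ord a; lia. Qed.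
Lemma xp_eq (j : 'I_n) (b : 'I_p) (i : 'I_n) : (@xidx p n j == pidx b i) = false.
Proof. apply/negbTE/eqP => /(congr1 val) /=; have := ltn_ord j; lia. Qed.
Lemma xt_eq (a : 'I_p) (i : 'I_n) : (@xidx p n i == tidx a) = false.
Proof. by rewrite eq_sym tx_eq. Qed.
Lemma pt_eq (a b : 'I_p) (i : 'I_n) : (@pidx p n b i == tidx a) = false.
Proof. by rewrite eq_sym tp_eq. Qed.
Lemma px_eq (j : 'I_n) (b : 'I_p) (i : 'I_n) : (@pidx p n b i == xidx j) = false.
Proof. by rewrite eq_sym xp_eq. Qed.

Variant idx_spec : 'I_N -> Type :=
 | IT a : idx_spec (tidx a) | IX i : idx_spec (xidx i) | IP a i : idx_spec (pidx a i).
Lemma idxP al : idx_spec al.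
Proof.
case: (split_ordP al) => [a ->|k ->]; first exact: IT.
case: (split_ordP k) => [i ->|q ->]; first exact: (IX i).
by case/mxvec_indexP: q => a i; exact: (IP a i).
Qed.

Lemma sumN (R : zmodType) (F : 'I_N -> R) :
  \sum_al F al = \sum_a F (tidx a) + \sum_i F (xidx i) + \sum_a \sum_i F (pidx a i).
Proof.
rewrite big_split_ord /= big_split_ord /= addrA; congr (_ + _ + _).
rewrite (reindex (uncurry (@mxvec_index p n))) /=; last first.
  have [g K1 K2] := @curry_mxvec_bij p n.
  exists g => x _; [exact: K1|exact: K2].
by rewrite pair_big /=; apply: eq_bigr => -[a i] _.
Qed.
End Idx.


Lemma sum_ordE (V : zmodType) k (j : 'I_k) (F : 'I_k -> V) :
  (forall c, j != c -> F c = 0) -> \sum_c F c = F j.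
Proof.
move=> H; rewrite (bigD1 j) //= big1 ?addr0 // => c /negPf cj.
by apply: H; rewrite eq_sym cj.
Qed.
Lemma sum0E (V : zmodType) k (F : 'I_k -> V) : (forall c, F c = 0) -> \sum_c F c = 0.
Proof. by move=> H; rewrite big1. Qed.

Ltac zs := rewrite ?tidx_eq ?xidx_eq ?pidx_eq ?tx_eq ?tp_eq ?xt_eq ?xp_eq ?pt_eq ?px_eq ?eqxx ?andbF ?andbT ?andFb /=.
Ltac zeroE E := repeat (apply: sum0E => ?); zs; rewrite ?E /= ?mul0r ?mulr0 ?scale0r //.
Ltac zero := repeat (apply: sum0E => ?); zs; rewrite ?mul0r ?mulr0 ?mul0r ?scale0r //.

Section L.
Variable V : zmodType.
Lemma L1 (a b c d : V) : a = 0 -> a + b + c + d = 0 + b + c + d. Proof. by move=> ->. Qed.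
Lemma L2 (a b c d : V) : b = 0 -> a + b + c + d = a + 0 + c + d. Proof. by move=> ->. Qed.
Lemma L3 (a b c d : V) : c = 0 -> a + b + c + d = a + b + 0 + d. Proof. by move=> ->. Qed.
Lemma L4 (a b c d : V) : d = 0 -> a + b + c + d = a + b + c + 0. Proof. by move=> ->. Qed.
End L.

Ltac col x := rewrite (sum_ordE (j:=x)); last by
  let H := fresh "H" in let H' := fresh "H" in intros ? H; apply negbTE in H; assert (H' := H); rewrite eq_sym in H';
  repeat (apply: sum0E => ?); zs; rewrite ?H ?H' ?andbF ?andFb /= ?mul0r ?mulr0 ?mul0r ?scale0r //.
Ltac g4 := rewrite L4; last by zero.
Ltac g3 := rewrite L3; last by zero.
Ltac g2 := rewrite L2; last by zero.
Ltac g1 := rewrite L1; last by zero.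
Section Conn.
Variables (R : realType) (p n : nat) (h : 'rV[R]_p -> 'M[R]_p) (phi : 'rV[R]_n -> 'M[R]_n).
Local Notation K := (conn h phi).


Lemma K_ttt c b a z : K (tidx c) (tidx b) (tidx a) z = chiE h a b c z.
Proof. by rewrite /conn; g4; g3; g2; col c; col b; col a; zs; rewrite ?mul1r ?addr0 ?add0r. Qed.
Lemma K_ttx c b i z : K (tidx c) (tidx b) (xidx i) z = 0.
Proof. by rewrite /conn; g4; g3; g2; g1; rewrite ?addr0 ?add0r. Qed.
Lemma K_ttp c b a i z : K (tidx c) (tidx b) (pidx a i) z = 0.
Proof. by rewrite /conn; g4; g3; g2; g1; rewrite ?addr0 ?add0r. Qed.
Lemma K_tx c j al z : K (tidx c) (xidx j) al z = 0.
Proof. by rewrite /conn; g4; g3; g2; g1; rewrite ?addr0 ?add0r. Qed.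
Lemma K_tpp c f j b i z : K (tidx c) (pidx f j) (pidx b i) z = (i == j)%:R * chiE h b f c z.
Proof. by rewrite /conn; g4; g3; g1; col c; col f; col j; col b; zs; rewrite ?addr0 ?add0r. Qed.
Lemma K_tpt c f j a z : K (tidx c) (pidx f j) (tidx a) z = 0.
Proof. by rewrite /conn; g4; g3; g2; g1; rewrite ?addr0 ?add0r. Qed.
Lemma K_tpx c f j i z : K (tidx c) (pidx f j) (xidx i) z = 0.
Proof. by rewrite /conn; g4; g3; g2; g1; rewrite ?addr0 ?add0r. Qed.
Lemma K_xxx k j i z : K (xidx k) (xidx j) (xidx i) z = gamE phi i j k z.
Proof. by rewrite /conn; g4; g2; g1; col k; col j; col i; zs; rewrite ?mul1r ?addr0 ?add0r. Qed.
Lemma K_xxt k j a z : K (xidx k) (xidx j) (tidx a) z = 0.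
Proof. by rewrite /conn; g4; g3; g2; g1; rewrite ?addr0 ?add0r. Qed.
Lemma K_xxp k j a i z : K (xidx k) (xidx j) (pidx a i) z = 0.
Proof. by rewrite /conn; g4; g3; g2; g1; rewrite ?addr0 ?add0r. Qed.
Lemma K_xt k b al z : K (xidx k) (tidx b) al z = 0.
Proof. by rewrite /conn; g4; g3; g2; g1; rewrite ?addr0 ?add0r. Qed.
Lemma K_xpp k b s b' i z :
  K (xidx k) (pidx b s) (pidx b' i) z = (b' == b)%:R * - gamE phi s i k z.
Proof. by rewrite /conn; g3; g2; g1; col k; col b; col s; col i; zs; rewrite ?add0r ?addr0 ?andbT. Qed.
Lemma K_xpt k b s a z : K (xidx k) (pidx b s) (tidx a) z = 0.
Proof. by rewrite /conn; g4; g3; g2; g1; rewrite ?addr0 ?add0r. Qed.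
Lemma K_xpx k b s i z : K (xidx k) (pidx b s) (xidx i) z = 0.
Proof. by rewrite /conn; g4; g3; g2; g1; rewrite ?addr0 ?add0r. Qed.
Lemma K_p a i ga al z : K (pidx a i) ga al z = 0.
Proof. by rewrite /conn; g4; g3; g2; g1; rewrite ?addr0 ?add0r. Qed.
End Conn.



Section L3.
Variable V : zmodType.
Lemma M1 (a b c : V) : a = 0 -> a + b + c = 0 + b + c. Proof. by move=> ->. Qed.
Lemma M2 (a b c : V) : b = 0 -> a + b + c = a + 0 + c. Proof. by move=> ->. Qed.
Lemma M3 (a b c : V) : c = 0 -> a + b + c = a + b + 0. Proof. by move=> ->. Qed.
End L3.
Ltac h1 := rewrite M1; last by zero.
Ltac h2 := rewrite M2; last by zero.
Ltac h3 := rewrite M3; last by zero.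

Section Frame.
Variables (R : realType) (p n : nat) (h : 'rV[R]_p -> 'M[R]_p) (phi : 'rV[R]_n -> 'M[R]_n)
  (A : 'rV[R]_p -> 'rV[R]_n -> 'M[R]_(p, n)) (m e : R).
Local Notation N := (Ndim p n).
Local Notation Fr := (frame h phi A m e).
Local Notation Cf := (coframe h phi A m e).

Lemma cf_t c z v : Cf (tidx c) z v = v ord0 (tidx c).
Proof. by rewrite /coframe; h2; h3; col c; zs; rewrite mul1r !addr0. Qed.
Lemma cf_x k z v : Cf (xidx k) z v = v ord0 (xidx k).
Proof. by rewrite /coframe; h1; h3; col k; zs; rewrite mul1r addr0 add0r. Qed.
Lemma cf_p b j z v : Cf (pidx b j) z v =
  v ord0 (pidx b j)
  + \sum_(f < p) \sum_(g < p) chiE h b f g z * pc z g j * v ord0 (tidx f)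
  + \sum_(r < n) N2 phi A m e b j r z * v ord0 (xidx r).
Proof. by rewrite /coframe; h1; h2; col b; col j; zs; rewrite mul1r !add0r. Qed.

Lemma fr_t a z : Fr (tidx a) z = ebasis (tidx a) - \sum_(f < p) \sum_(g < p) \sum_(r < n)
        (chiE h f a g z * pc z g r) *: ebasis (pidx f r).
Proof. by rewrite /frame; h2; h3; col a; zs; rewrite scale1r !addr0. Qed.
Lemma fr_x i z : Fr (xidx i) z = ebasis (xidx i) - \sum_(f < p) \sum_(r < n)
        N2 phi A m e f r i z *: ebasis (pidx f r).
Proof. by rewrite /frame; h1; h3; col i; zs; rewrite scale1r addr0 add0r. Qed.
Lemma fr_p a i z : Fr (pidx a i) z = ebasis (pidx a i).
Proof. by rewrite /frame; h1; h2; col a; col i; zs; rewrite scale1r !add0r. Qed.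


Lemma ebE (k q : 'I_N) : (ebasis k : 'rV[R]_N) ord0 q = (q == k)%:R.
Proof. by rewrite /ebasis mxE eqxx. Qed.

Lemma entB (u v : 'rV[R]_N) q : (u - v) ord0 q = u ord0 q - v ord0 q.
Proof. by rewrite !mxE. Qed.
Lemma entS k (F : 'I_k -> 'rV[R]_N) q : (\sum_i F i) ord0 q = \sum_i F i ord0 q.
Proof. by rewrite summxE. Qed.
Lemma entZ (a : R) (u : 'rV[R]_N) q : (a *: u) ord0 q = a * u ord0 q.
Proof. by rewrite mxE. Qed.

Ltac ezero := repeat (rewrite ?entS ?entZ ?ebE; try (apply: sum0E => ?)); zs; rewrite ?mulr0 ?mul0r //.

Lemma frE_t al z c : Fr al z ord0 (tidx c) = (al == tidx c)%:R.
Proof.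
case: (idxP al) => [a|i|a i]; rewrite ?fr_t ?fr_x ?fr_p ?entB ebE.
- by rewrite entS [X in _ - X]sum0E ?subr0 ?tidx_eq 1?eq_sym // => f; ezero.
- by rewrite entS [X in _ - X]sum0E ?subr0 ?xt_eq ?tx_eq // => f; ezero.
- by zs.
Qed.
Lemma frE_x al z c : Fr al z ord0 (xidx c) = (al == xidx c)%:R.
Proof.
case: (idxP al) => [a|i|a i]; rewrite ?fr_t ?fr_x ?fr_p ?entB ebE.
- by rewrite entS [X in _ - X]sum0E ?subr0 ?xt_eq ?tx_eq // => f; ezero.
- by rewrite entS [X in _ - X]sum0E ?subr0 ?xidx_eq 1?eq_sym // => f; ezero.
- by zs.
Qed.

Lemma entD (u v : 'rV[R]_N) q : (u + v) ord0 q = u ord0 q + v ord0 q.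
Proof. by rewrite !mxE. Qed.
Lemma cfD al z u v : Cf al z (u + v) = Cf al z u + Cf al z v.
Proof.
case: (idxP al) => [a|i|a i]; rewrite ?cf_t ?cf_x ?cf_p ?entD //.
have -> : \sum_(f < p) \sum_(g < p) chiE h a f g z * pc z g i * (u + v) ord0 (tidx f) =
  \sum_(f < p) \sum_(g < p) chiE h a f g z * pc z g i * u ord0 (tidx f) +
  \sum_(f < p) \sum_(g < p) chiE h a f g z * pc z g i * v ord0 (tidx f).
  rewrite -big_split; apply: eq_bigr => f _; rewrite -big_split; apply: eq_bigr => g _.
  by rewrite entD mulrDr.
have -> : \sum_(r < n) N2 phi A m e a i r z * (u + v) ord0 (xidx r) =
  \sum_(r < n) N2 phi A m e a i r z * u ord0 (xidx r) +
  \sum_(r < n) N2 phi A m e a i r z * v ord0 (xidx r).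
  by rewrite -big_split; apply: eq_bigr => r _; rewrite entD mulrDr.
set a1 := u ord0 _; set a2 := v ord0 _; set b1 := \sum_(f < p) _; set b2 := \sum_(f < p) _.
set c1 := \sum_(r < n) _; set c2 := \sum_(r < n) _.
ring.
Qed.
Lemma cfZ al z (a : R) u : Cf al z (a *: u) = a * Cf al z u.
Proof.
case: (idxP al) => [b|i|b i]; rewrite ?cf_t ?cf_x ?cf_p ?entZ //.
have -> : \sum_(f < p) \sum_(g < p) chiE h b f g z * pc z g i * (a *: u) ord0 (tidx f) =
  a * \sum_(f < p) \sum_(g < p) chiE h b f g z * pc z g i * u ord0 (tidx f).
  rewrite mulr_sumr; apply: eq_bigr => f _; rewrite mulr_sumr; apply: eq_bigr => g _.
  by rewrite entZ mulrCA.
have -> : \sum_(r < n) N2 phi A m e b i r z * (a *: u) ord0 (xidx r) =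
  a * \sum_(r < n) N2 phi A m e b i r z * u ord0 (xidx r).
  by rewrite mulr_sumr; apply: eq_bigr => r _; rewrite entZ mulrCA.
by rewrite !mulrDr.
Qed.
Lemma cf0 al z : Cf al z 0 = 0.
Proof. by rewrite -(scale0r (0 : 'rV[R]_N)) cfZ mul0r. Qed.
Lemma cfB al z u v : Cf al z (u - v) = Cf al z u - Cf al z v.
Proof. by rewrite cfD -scaleN1r cfZ mulN1r. Qed.
Lemma cfS k (F : 'I_k -> 'rV[R]_N) al z : Cf al z (\sum_i F i) = \sum_i Cf al z (F i).
Proof. exact: (big_morph _ (cfD al z) (cf0 al z)). Qed.

Lemma frE_tp a b j z : Fr (tidx a) z ord0 (pidx b j) = - \sum_(g < p) chiE h b a g z * pc z g j.
Proof.
rewrite fr_t entB ebE entS; zs; rewrite sub0r; congr (- _).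
rewrite (sum_ordE (j:=b)); last first.
  move=> f /negbTE H; rewrite entS; apply: sum0E => g; rewrite entS; apply: sum0E => r.
  by rewrite entZ ebE; zs; rewrite H /= mulr0.
rewrite entS; apply: eq_bigr => g _; rewrite entS (sum_ordE (j:=j)); last first.
  by move=> r /negbTE H; rewrite entZ ebE; zs; rewrite H ?andbF mulr0.
by rewrite entZ ebE; zs; rewrite mulr1.
Qed.
Lemma frE_xp i b j z : Fr (xidx i) z ord0 (pidx b j) = - N2 phi A m e b j i z.
Proof.
rewrite fr_x entB ebE entS; zs; rewrite sub0r; congr (- _).
rewrite (sum_ordE (j:=b)); last first.
  move=> f /negbTE H; rewrite entS; apply: sum0E => r.
  by rewrite entZ ebE; zs; rewrite H /= mulr0.
rewrite entS (sum_ordE (j:=j)); last first.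
  by move=> r /negbTE H; rewrite entZ ebE; zs; rewrite H ?andbF mulr0.
by rewrite entZ ebE; zs; rewrite mulr1.
Qed.
Lemma frE_pp a i b j z : Fr (pidx a i) z ord0 (pidx b j) = (pidx b j == pidx a i)%:R.
Proof. by rewrite fr_p ebE. Qed.

Lemma dual be al z : Cf be z (Fr al z) = (be == al)%:R.
Proof.
case: (idxP be) => [c|k|b j].
- by rewrite cf_t frE_t eq_sym.
- by rewrite cf_x frE_x eq_sym.
rewrite cf_p.
under eq_bigr => f _ do under eq_bigr => g _ do rewrite frE_t.
under [X in _ + X = _]eq_bigr => r _ do rewrite frE_x.
case: (idxP al) => [a|i|a i].
- rewrite frE_tp [X in _ + X + _](sum_ordE (j:=a)); last first.
    by move=> f /negbTE H; apply: sum0E => g; zs; rewrite H mulr0.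
  rewrite [X in _ + X]sum0E; last by move=> r; zs; rewrite mulr0.
  under eq_bigr => g _ do (zs; rewrite mulr1).
  by zs; rewrite addr0 addNr.
- rewrite frE_xp (sum0E (k:=p)); last first.
    by move=> f; apply: sum0E => g; zs; rewrite mulr0.
  rewrite (sum_ordE (j:=i)); last by move=> r /negbTE H; zs; rewrite H mulr0.
  by zs; rewrite mulr1 addr0 addNr.
- rewrite frE_pp (sum0E (k:=p)); last first.
    by move=> f; apply: sum0E => g; zs; rewrite mulr0.
  by rewrite sum0E ?addr0 // => r; zs; rewrite mulr0.
Qed.
End Frame.


Section Der.
Variables (R : realType) (p n : nat).
Local Notation N := (Ndim p n).

Lemma tpart_lin (s : R) (v z : 'rV[R]_N) : tpart (s *: v + z) = s *: tpart v + tpart z.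
Proof. by apply/rowP => a; rewrite !mxE. Qed.
Lemma xpart_lin (s : R) (v z : 'rV[R]_N) : xpart (s *: v + z) = s *: xpart v + xpart z.
Proof. by apply/rowP => a; rewrite !mxE. Qed.

Lemma D_t (f : 'rV[R]_p -> R) (z v : 'rV[R]_N) :
  derive (fun w => f (tpart w)) z v = derive f (tpart z) (tpart v).
Proof.
rewrite /derive; do 2 f_equal; apply: funext => s /=.
by rewrite tpart_lin.
Qed.
Lemma D_x (f : 'rV[R]_n -> R) (z v : 'rV[R]_N) :
  derive (fun w => f (xpart w)) z v = derive f (xpart z) (xpart v).
Proof.
rewrite /derive; do 2 f_equal; apply: funext => s /=.
by rewrite xpart_lin.
Qed.
Lemma D_const (g : 'rV[R]_N -> R) (z v : 'rV[R]_N) :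
  (forall s : R, g (s *: v + z) = g z) -> derive g z v = 0.
Proof.
move=> H; rewrite -(derive_cst (g z) z v) /derive; do 2 f_equal.
by apply: funext => s /=; rewrite H.
Qed.
End Der.


Section Cov.
Variables (R : realType) (p n : nat) (h : 'rV[R]_p -> 'M[R]_p) (phi : 'rV[R]_n -> 'M[R]_n)
  (A : 'rV[R]_p -> 'rV[R]_n -> 'M[R]_(p, n)) (m e : R).
Local Notation N := (Ndim p n).
Local Notation Fr := (frame h phi A m e).
Local Notation Cf := (coframe h phi A m e).
Local Notation K := (conn h phi).
Local Notation cD := (covD h phi A m e).

Lemma collapse (c : 'I_N) z (F : 'I_N -> R) : \sum_be Cf be z (Fr c z) * F be = F c.
Proof.
rewrite (sum_ordE (j:=c)) ?dual ?eqxx ?mul1r // => be /negbTE H.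
by rewrite dual eq_sym H mul0r.
Qed.
Lemma collapse' (c : 'I_N) z (F : 'I_N -> R) : \sum_be F be * Cf be z (Fr c z) = F c.
Proof. by under eq_bigr do rewrite mulrC; rewrite collapse. Qed.

Lemma comb (k : 'I_N -> R) al z : Cf al z (\sum_be k be *: Fr be z) = k al.
Proof.
rewrite cfS (eq_bigr (fun be => k be * Cf al z (Fr be z))); last by move=> be _; rewrite cfZ.
rewrite (sum_ordE (j:=al)) ?dual ?eqxx ?mulr1 // => be /negbTE H.
by rewrite dual H mulr0.
Qed.

Lemma covD_Fr (X : vfield R N) ga z :
  cD X (Fr ga) z = \sum_al (\sum_be Cf be z (X z) * K be ga al z) *: Fr al z.
Proof.
rewrite /covD; apply: eq_bigr => al _; congr (_ *: _).
have -> : (fun w => Cf al w (Fr ga w)) = cst (al == ga)%:R.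
  by apply: funext => w; rewrite dual.
rewrite /dalong derive_cst add0r; apply: eq_bigr => be _.
by under eq_bigr do rewrite mulrAC; rewrite collapse'.
Qed.

Lemma covD_FrFr a b : cD (Fr a) (Fr b) = fun w => \sum_al K a b al w *: Fr al w.
Proof.
apply: funext => w; rewrite covD_Fr; apply: eq_bigr => al _.
by rewrite collapse.
Qed.

Lemma covD_comb (X : vfield R N) (k : 'I_N -> 'rV[R]_N -> R) z :
  cD X (fun w => \sum_al k al w *: Fr al w) z =
  \sum_al (dalong X (k al) z + \sum_be \sum_ga Cf be z (X z) * k ga z * K be ga al z)
     *: Fr al z.
Proof.
rewrite /covD; apply: eq_bigr => al _; congr ((_ + _) *: _).
  by congr dalong; apply: funext => w; rewrite comb.
by apply: eq_bigr => be _; apply: eq_bigr => ga _; rewrite comb.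
Qed.

Lemma ric_gen a b z : ricD h phi A m e (Fr a) (Fr b) z =
  \sum_c (dalong (Fr c) (K a b c) z + \sum_g K a b g z * K c g c z
          - (dalong (Fr a) (K c b c) z + \sum_g K c b g z * K a g c z)
          - \sum_be Cf be z (lie (Fr c) (Fr a) z) * K be b c z).
Proof.
rewrite /ricD; apply: eq_bigr => c _.
rewrite /curv !covD_FrFr !covD_comb covD_Fr !cfB !comb.
congr (_ + _ - (_ + _) - _).
- by rewrite exchange_big /=; apply: eq_bigr => g _; under eq_bigr do rewrite -mulrA; rewrite collapse.
- by rewrite exchange_big /=; apply: eq_bigr => g _; under eq_bigr do rewrite -mulrA; rewrite collapse.
Qed.
End Cov.



Section Ric.
Variables (R : realType) (p n : nat) (h : 'rV[R]_p -> 'M[R]_p) (phi : 'rV[R]_n -> 'M[R]_n)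
  (A : 'rV[R]_p -> 'rV[R]_n -> 'M[R]_(p, n)) (m e : R).
Local Notation N := (Ndim p n).
Local Notation Fr := (frame h phi A m e).
Local Notation Cf := (coframe h phi A m e).
Local Notation K := (conn h phi).

Lemma lie_t c a z q : lie (Fr c) (Fr a) z ord0 (tidx q) = 0.
Proof.
rewrite mxE.
have E : forall b, (fun w => Fr b w ord0 (tidx q)) = cst (b == tidx q)%:R.
  by move=> b; apply: funext => w; rewrite frE_t.
by rewrite /dalong !E !derive_cst subrr.
Qed.
Lemma lie_x c a z q : lie (Fr c) (Fr a) z ord0 (xidx q) = 0.
Proof.
rewrite mxE.
have E : forall b, (fun w => Fr b w ord0 (xidx q)) = cst (b == xidx q)%:R.
  by move=> b; apply: funext => w; rewrite frE_x.
by rewrite /dalong !E !derive_cst subrr.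
Qed.
Lemma T5z a b c z : \sum_be Cf be z (lie (Fr c) (Fr a) z) * K be b c z = 0.
Proof.
apply: sum0E => be; case: (idxP be) => [q|q|q i].
- by rewrite cf_t lie_t mul0r.
- by rewrite cf_x lie_x mul0r.
- by rewrite K_p mulr0.
Qed.

Lemma dal0 (X : vfield R N) z : dalong X (fun _ => 0) z = 0.
Proof. exact: derive_cst. Qed.
Lemma dal_chi c i l j z :
  dalong (Fr c) (chiE h i l j) z = derive (christoffel h i l j) (tpart z) (tpart (Fr c z)).
Proof. exact: D_t. Qed.
Lemma dal_gam c i l j z :
  dalong (Fr c) (gamE phi i l j) z = derive (christoffel phi i l j) (xpart z) (xpart (Fr c z)).
Proof. exact: D_x. Qed.

Lemma tpart_Ft i z : tpart (Fr (tidx i) z) = delta_mx ord0 i.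
Proof. by apply/rowP => a; rewrite mxE frE_t mxE tidx_eq eq_sym. Qed.
Lemma tpart_Fx i z : tpart (Fr (xidx i) z) = 0.
Proof. by apply/rowP => a; rewrite mxE frE_t mxE; zs. Qed.
Lemma xpart_Ft i z : xpart (Fr (tidx i) z) = 0.
Proof. by apply/rowP => a; rewrite mxE frE_x mxE; zs. Qed.
Lemma xpart_Fx i z : xpart (Fr (xidx i) z) = delta_mx ord0 i.
Proof. by apply/rowP => a; rewrite mxE frE_x mxE xidx_eq eq_sym. Qed.


Ltac Kz := rewrite ?K_ttx ?K_ttp ?K_tx ?K_tpt ?K_tpx ?K_xxt ?K_xxp ?K_xt ?K_xpt ?K_xpx ?K_p ?mulr0 ?mul0r.

Lemma sumz (F : 'I_N -> R) : (forall a, F (tidx a) = 0) -> (forall i, F (xidx i) = 0) ->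
  (forall a i, F (pidx a i) = 0) -> \sum_g F g = 0.
Proof. by move=> H1 H2 H3; apply: sum0E => g; case: (idxP g) => [a|i|a i]; [apply: H1|apply: H2|apply: H3]. Qed.
Lemma sumt (F : 'I_N -> R) : (forall i, F (xidx i) = 0) ->
  (forall a i, F (pidx a i) = 0) -> \sum_g F g = \sum_a F (tidx a).
Proof.
move=> H2 H3; rewrite sumN [X in _ + X + _]sum0E // [X in _ + X]sum0E ?addr0 //.
by move=> a; rewrite sum0E.
Qed.
Lemma sumx (F : 'I_N -> R) : (forall i, F (tidx i) = 0) ->
  (forall a i, F (pidx a i) = 0) -> \sum_g F g = \sum_i F (xidx i).
Proof.
move=> H2 H3; rewrite sumN [X in X + _ + _]sum0E // [X in _ + X]sum0E ?addr0 ?add0r //.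
by move=> a; rewrite sum0E.
Qed.

Lemma Ric_tt j l z : ricD h phi A m e (Fr (tidx j)) (Fr (tidx l)) z = ricci h j l (tpart z).
Proof.
rewrite ric_gen; under eq_bigr => c _ do rewrite T5z subr0.
rewrite sumt; first last.
- move=> a i; rewrite (funext (K_ttp h phi j l a i)) (funext (K_p h phi a i (tidx l) (pidx a i))) !dal0.
  rewrite [X in 0 + X - _]sum0E; last by move=> g; rewrite K_p mulr0.
  by rewrite [X in _ - (0 + X)]sum0E ?subrr // => g; rewrite K_p mul0r.
- move=> k; rewrite (funext (K_ttx h phi j l k)) (funext (K_xt h phi k l (xidx k))) !dal0.
  rewrite [X in 0 + X - _]sumz; first last.
  + by move=> a i; rewrite K_ttp mul0r.
  + by move=> i; rewrite K_ttx mul0r.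
  + by move=> a; rewrite K_xt mulr0.
  by rewrite [X in _ - (0 + X)]sum0E ?subrr ?addr0 // => g; rewrite K_xt mul0r.
rewrite /ricci; apply: eq_bigr => i _.
rewrite (funext (K_ttt h phi j l i)) (funext (K_ttt h phi i l i)) !dal_chi !tpart_Ft.
rewrite [X in _ + X - _]sumt; first last.
+ by move=> a k; rewrite K_ttp mul0r.
+ by move=> k; rewrite K_ttx mul0r.
rewrite [X in _ - (_ + X)]sumt; first last.
+ by move=> a k; rewrite K_ttp mul0r.
+ by move=> k; rewrite K_ttx mul0r.
under eq_bigr do rewrite !K_ttt.
under [X in _ - (_ + X)]eq_bigr do rewrite !K_ttt.
by rewrite /partial /chiE sumrB opprD addrACA.
Qed.

Lemma Ric_xx j l z : ricD h phi A m e (Fr (xidx j)) (Fr (xidx l)) z = ricci phi j l (xpart z).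
Proof.
rewrite ric_gen; under eq_bigr => c _ do rewrite T5z subr0.
rewrite sumx; first last.
- move=> a i; rewrite (funext (K_xxp h phi j l a i)) (funext (K_p h phi a i (xidx l) (pidx a i))) !dal0.
  rewrite [X in 0 + X - _]sum0E; last by move=> g; rewrite K_p mulr0.
  by rewrite [X in _ - (0 + X)]sum0E ?subrr // => g; rewrite K_p mul0r.
- move=> k; rewrite (funext (K_xxt h phi j l k)) (funext (K_tx h phi k l (tidx k))) !dal0.
  rewrite [X in 0 + X - _]sumz; first last.
  + by move=> a i; rewrite K_xxp mul0r.
  + by move=> i; rewrite K_tx mulr0.
  + by move=> a; rewrite K_xxt mul0r.
  by rewrite [X in _ - (0 + X)]sum0E ?subrr ?addr0 // => g; rewrite K_tx mul0r.
rewrite /ricci; apply: eq_bigr => i _.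
rewrite (funext (K_xxx h phi j l i)) (funext (K_xxx h phi i l i)) !dal_gam !xpart_Fx.
rewrite [X in _ + X - _]sumx; first last.
+ by move=> a k; rewrite K_xxp mul0r.
+ by move=> k; rewrite K_xxt mul0r.
rewrite [X in _ - (_ + X)]sumx; first last.
+ by move=> a k; rewrite K_xxp mul0r.
+ by move=> k; rewrite K_xxt mul0r.
under eq_bigr do rewrite !K_xxx.
under [X in _ - (_ + X)]eq_bigr do rewrite !K_xxx.
by rewrite /partial /gamE sumrB opprD addrACA.
Qed.

Lemma K_shift be ga al (s : R) (v z : 'rV[R]_N) : tpart v = 0 -> xpart v = 0 ->
  K be ga al (s *: v + z) = K be ga al z.
Proof. by move=> Ht Hx; rewrite /conn /chiE /gamE tpart_lin xpart_lin Ht Hx !scaler0 !add0r. Qed.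

Lemma Ric_pp a i b j z : ricD h phi A m e (Fr (pidx a i)) (Fr (pidx b j)) z = 0.
Proof.
rewrite ric_gen; apply: sum0E => c.
rewrite T5z subr0 (funext (K_p h phi a i (pidx b j) c)) dal0.
rewrite [X in _ + X - _]sum0E; last by move=> g; rewrite K_p mul0r.
rewrite [X in _ - (_ + X)]sum0E; last by move=> g; rewrite K_p mulr0.
rewrite /dalong (@D_const _ _ _ _ z); first by rewrite !addr0 subrr.
move=> s; apply: K_shift.
- by apply/rowP => q; rewrite mxE fr_p ebE mxE; zs.
- by apply/rowP => q; rewrite mxE fr_p ebE mxE; zs.
Qed.
End Ric.



Section Blk.
Variables (R : realType) (p n : nat).
Local Notation N := (Ndim p n).

Definition Blk (X : 'I_p -> 'I_p -> R) (Y : 'I_n -> 'I_n -> R)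
  (Z : 'I_p -> 'I_p -> 'I_n -> 'I_n -> R) (al be : 'I_N) : R :=
  \sum_a \sum_b X a b * (al == tidx a)%:R * (be == tidx b)%:R
  + \sum_i \sum_j Y i j * (al == xidx i)%:R * (be == xidx j)%:R
  + \sum_a \sum_b \sum_i \sum_j Z a b i j * (pidx a i == al)%:R * (pidx b j == be)%:R.

Variables (X : 'I_p -> 'I_p -> R) (Y : 'I_n -> 'I_n -> R) (Z : 'I_p -> 'I_p -> 'I_n -> 'I_n -> R).

Lemma Blk_tt a b : Blk X Y Z (tidx a) (tidx b) = X a b.
Proof. by rewrite /Blk; h2; h3; col a; col b; zs; rewrite !mulr1 !addr0. Qed.
Lemma Blk_xx i j : Blk X Y Z (xidx i) (xidx j) = Y i j.
Proof. by rewrite /Blk; h1; h3; col i; col j; zs; rewrite !mulr1 addr0 add0r. Qed.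
Lemma Blk_pp a i b j : Blk X Y Z (pidx a i) (pidx b j) = Z a b i j.
Proof. by rewrite /Blk; h1; h2; col a; col b; col i; col j; zs; rewrite !mulr1 !add0r. Qed.
Lemma Blk_tx a j : Blk X Y Z (tidx a) (xidx j) = 0.
Proof. by rewrite /Blk; h1; h2; h3; rewrite !addr0. Qed.
Lemma Blk_tp a b j : Blk X Y Z (tidx a) (pidx b j) = 0.
Proof. by rewrite /Blk; h1; h2; h3; rewrite !addr0. Qed.
Lemma Blk_xt i b : Blk X Y Z (xidx i) (tidx b) = 0.
Proof. by rewrite /Blk; h1; h2; h3; rewrite !addr0. Qed.
Lemma Blk_xp i b j : Blk X Y Z (xidx i) (pidx b j) = 0.
Proof. by rewrite /Blk; h1; h2; h3; rewrite !addr0. Qed.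
Lemma Blk_pt a i b : Blk X Y Z (pidx a i) (tidx b) = 0.
Proof. by rewrite /Blk; h1; h2; h3; rewrite !addr0. Qed.
Lemma Blk_px a i j : Blk X Y Z (pidx a i) (xidx j) = 0.
Proof. by rewrite /Blk; h1; h2; h3; rewrite !addr0. Qed.
End Blk.

Ltac bsimp := rewrite ?Blk_tt ?Blk_xx ?Blk_pp ?Blk_tx ?Blk_tp ?Blk_xt ?Blk_xp ?Blk_pt ?Blk_px ?mul0r ?mulr0.

Lemma Blk_mul (R : realType) p n (X X' : 'I_p -> 'I_p -> R) (Y Y' : 'I_n -> 'I_n -> R)
  (Z Z' : 'I_p -> 'I_p -> 'I_n -> 'I_n -> R) al ga :
  \sum_be Blk X Y Z al be * Blk X' Y' Z' be ga =
  Blk (fun a c => \sum_b X a b * X' b c) (fun i k => \sum_j Y i j * Y' j k)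
      (fun a c i k => \sum_b \sum_j Z a b i j * Z' b c j k) al ga.
Proof.
rewrite sumN.
under eq_bigr do bsimp.
under [X in _ + X + _]eq_bigr do bsimp.
under [X in _ + X]eq_bigr do under eq_bigr do bsimp.
case: (idxP al) => [a|i|a i]; case: (idxP ga) => [c|k|c k]; bsimp;
  under eq_bigr do bsimp;
  under [X in _ + X + _]eq_bigr do bsimp;
  under [X in _ + X]eq_bigr do under eq_bigr do bsimp;
  rewrite ?big1_eq ?addr0 ?add0r //.
Qed.


Lemma pd_unit (R : realType) k (M : 'M[R]_k) :
  (forall v : 'rV[R]_k, v != 0 -> 0 < (v *m M *m v^T) ord0 ord0) -> M \in unitmx.
Proof.
move=> H; rewrite unitmxE unitfE; apply/negP => /det0P [v nz vM].
by have := H v nz; rewrite vM mul0mx mxE ltxx.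
Qed.

Lemma inv_sum (R : realType) k (M : 'M[R]_k) a c : M \in unitmx ->
  \sum_b M a b * invmx M b c = (a == c)%:R.
Proof. by move=> U; move: (mulmxV U) => /matrixP /(_ a c); rewrite !mxE. Qed.
Lemma inv_sum' (R : realType) k (M : 'M[R]_k) a c : M \in unitmx ->
  \sum_b invmx M a b * M b c = (a == c)%:R.
Proof. by move=> U; move: (mulVmx U) => /matrixP /(_ a c); rewrite !mxE. Qed.

Section Main.
Variables (R : realType) (p n : nat) (h : 'rV[R]_p -> 'M[R]_p) (phi : 'rV[R]_n -> 'M[R]_n)
  (A : 'rV[R]_p -> 'rV[R]_n -> 'M[R]_(p, n)) (m c e : R).
Local Notation N := (Ndim p n).
Local Notation Fr := (frame h phi A m e).

Lemma Gmet_frame z al be : Gmet h phi A m c e z (Fr al z) (Fr be z) =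
  Blk (fun a b => (4 * m * c)^-1 * h (tpart z) a b) (fun i j => phi (xpart z) i j)
      (fun a b i j => (4 * m * c)^-1 * h (tpart z) a b * invmx (phi (xpart z)) i j) al be.
Proof.
rewrite /Gmet /Blk /=; congr (_ + _ + _).
- by apply: eq_bigr => a _; apply: eq_bigr => b _; rewrite !frE_t.
- by apply: eq_bigr => a _; apply: eq_bigr => b _; rewrite !frE_x.
- apply: eq_bigr => a _; apply: eq_bigr => b _; apply: eq_bigr => i _; apply: eq_bigr => j _.
  by rewrite !dual.
Qed.
End Main.


Theorem mainTheorem4 (R : realType) (p n : nat)
  (h : 'rV[R]_p -> 'M[R]_p) (phi : 'rV[R]_n -> 'M[R]_n)
  (A : 'rV[R]_p -> 'rV[R]_n -> 'M[R]_(p, n)) (m c e : R) :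
  (* h : smooth Riemannian metric on the chart of T *)
  (forall a b, smooth (fun t => h t a b)) ->
  (forall t, (h t)^T = h t) ->
  (forall t (v : 'rV[R]_p), v != 0 -> 0 < (v *m h t *m v^T) ord0 ord0) ->
  (* phi : smooth semi-Riemannian metric on the chart of M *)
  (forall i j, smooth (fun x => phi x i j)) ->
  (forall x, (phi x)^T = phi x) ->
  (forall x, phi x \in unitmx) ->
  (* A : smooth d-tensor on T x M *)
  (forall f r, smooth (fun tx : 'rV[R]_(p + n) => A (lsubmx tx) (rsubmx tx) f r)) ->
  m != 0 -> 0 < c ->
  forall z : 'rV[R]_(Ndim p n),
    scD h phi A m c e z
    = 4 * m * c * scalar_curv h (tpart z) + scalar_curv phi (xpart z).
Proof.
move=> _ _ hpd _ _ phu _ mnz cpos z.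
set t := tpart z; set x := xpart z.
have hu : h t \in unitmx := pd_unit (hpd t).
have pu := phu x.
set k := 4 * m * c.
have k0 : k != 0.
  by rewrite /k !mulf_neq0 ?pnatr_eq0 // gt_eqF.
pose Mi := \matrix_(al, be) Blk (fun a b => k * invmx (h t) a b) (fun i j => invmx (phi x) i j)
   (fun a b i j => k * invmx (h t) a b * phi x i j) al be : 'M[R]_(Ndim p n).
rewrite /scD /=.
set Gf := \matrix_(al, be) _.
have GM : Gf *m Mi = 1%:M.
  apply/matrixP => al ga; rewrite !mxE.
  rewrite (eq_bigr (fun be => Blk (fun a b => k^-1 * h t a b) (fun i j => phi x i j)
      (fun a b i j => k^-1 * h t a b * invmx (phi x) i j) al be *
     Blk (fun a b => k * invmx (h t) a b) (fun i j => invmx (phi x) i j)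
   (fun a b i j => k * invmx (h t) a b * phi x i j) be ga)); last first.
    by move=> be _; rewrite !mxE Gmet_frame.
  rewrite Blk_mul.
  case: (idxP al) => [a|i|a i]; case: (idxP ga) => [d|l|d l]; bsimp; zs => //.
  - rewrite -(inv_sum a d hu); apply: eq_bigr => b _.
    by rewrite mulrACA mulVf // mul1r.
  - exact: inv_sum.
    rewrite -mulnb natrM -(inv_sum a d hu) -(inv_sum' i l pu) big_distrlr /=.
    apply: eq_bigr => b _; apply: eq_bigr => j _.
    rewrite -[RHS]mul1r -(mulVf k0); ring.
have uG := (mulmx1_unit GM).1.
have -> : invmx Gf = Mi by rewrite -(mulKmx uG Mi) GM mulmx1.
have Rt : forall a, \sum_be Mi (tidx a) be * ricD h phi A m e (frame h phi A m e (tidx a))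
     (frame h phi A m e be) z = k * \sum_b invmx (h t) a b * ricci h a b t.
  move=> a; rewrite sumN [X in _ + X + _]sum0E; last by move=> q; rewrite mxE Blk_tx mul0r.
  rewrite [X in _ + X]sum0E; last by move=> b; apply: sum0E => q; rewrite mxE Blk_tp mul0r.
  rewrite !addr0 mulr_sumr; apply: eq_bigr => b _.
  by rewrite mxE Blk_tt Ric_tt mulrA.
have Rx : forall i, \sum_be Mi (xidx i) be * ricD h phi A m e (frame h phi A m e (xidx i))
     (frame h phi A m e be) z = \sum_j invmx (phi x) i j * ricci phi i j x.
  move=> i; rewrite sumN [X in X + _ + _]sum0E; last by move=> q; rewrite mxE Blk_xt mul0r.
  rewrite [X in _ + X]sum0E; last by move=> b; apply: sum0E => q; rewrite mxE Blk_xp mul0r.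
  rewrite addr0 add0r; apply: eq_bigr => j _.
  by rewrite mxE Blk_xx Ric_xx.
have Rp : forall a i, \sum_be Mi (pidx a i) be * ricD h phi A m e (frame h phi A m e (pidx a i))
     (frame h phi A m e be) z = 0.
  move=> a i; rewrite sumN [X in X + _ + _]sum0E; last by move=> q; rewrite mxE Blk_pt mul0r.
  rewrite [X in _ + X + _]sum0E; last by move=> q; rewrite mxE Blk_px mul0r.
  rewrite !add0r; apply: sum0E => b; apply: sum0E => j.
  by rewrite Ric_pp mulr0.
rewrite sumN [X in _ + _ + X]sum0E ?addr0; last by move=> a; apply: sum0E => i; apply: Rp.
rewrite (eq_bigr (fun a => k * \sum_b invmx (h t) a b * ricci h a b t)); last by move=> a _; exact: Rt.
rewrite (eq_bigr (fun i => \sum_j invmx (phi x) i j * ricci phi i j x)); last by move=> i _; exact: Rx.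
by rewrite -mulr_sumr.
Qed.
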